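(* Let $K$ be a field, $A=\{\alpha_1,\dots,\alpha_m\}\subset K$ and $B=\{\beta_1,\dots,\beta_n\}\subset K$ finite sets with $|A|=m$, $|B|=n$, and $f=\prod_{i=1}^m(x-\alpha_i)$. Let $0\le d\le n-1$ and suppose $m\le d$. Then $$\operatorname{Syl}_{0,d}(A,B)=\begin{cases}0 & \text{if } m<d<n-1,\\ (-1)^{(m-d)(n-d)}\,f & \text{if } m<d=n-1 \text{ or } m=d\le n-1.\end{cases}$$
   Context: For finite sets $Y,Z$ of elements or indeterminates, $\mathcal{R}(Y,Z):=\prod_{y\in Y,z\in Z}(y-z)$, with $\mathcal{R}(Y,Z)=1$ if $Y$ or $Z$ is empty; for a single variable $x$, $\mathcal{R}(x,Z):=\mathcal{R}(\{x\},Z)$. For $0\le p\le m$, $0\le q\le n$, Sylvester's double sum is the polynomial in $x$ $$\operatorname{Syl}_{p,q}(A,B)(x):=\sum_{\substack{A'\subset A,\ B'\subset B\\ |A'|=p,\ |B'|=q}}\mathcal{R}(A',B')\,\mathcal{R}(A\setminus A',B\setminus B')\,\frac{\mathcal{R}(x,A')\,\mathcal{R}(x,B')}{\mathcal{R}(A',A\setminus A')\,\mathcal{R}(B',B\setminus B')}.$$ *)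

(* Defs.v *)
From mathcomp Require Import all_boot all_order all_algebra.
Set Implicit Arguments. Unset Strict Implicit. Unset Printing Implicit Defensive.
Import GRing.Theory.
Local Open Scope ring_scope.

(* The finite sets A = {a_0,...,a_(m-1)} and B = {b_0,...,b_(n-1)} are given by
   injective enumerations a : 'I_m -> K and b : 'I_n -> K; subsets A' of A are
   represented by subsets S : {set 'I_m} of indices. *)

Definition resR (K : fieldType) (m n : nat) (a : 'I_m -> K) (b : 'I_n -> K)
  (S : {set 'I_m}) (T : {set 'I_n}) : K :=
  \prod_(i in S) \prod_(j in T) (a i - b j).

Definition resX (K : fieldType) (m : nat) (a : 'I_m -> K) (S : {set 'I_m})
  : {poly K} := \prod_(i in S) ('X - (a i)%:P).

Definition Syl (K : fieldType) (m n : nat) (p q : nat)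
  (a : 'I_m -> K) (b : 'I_n -> K) : {poly K} :=
  \sum_(S : {set 'I_m} | #|S| == p) \sum_(T : {set 'I_n} | #|T| == q)
    ((resR a b S T * resR a b (~: S) (~: T))
       / (resR a a S (~: S) * resR b b T (~: T)))
    *: (resX a S * resX b T).

(* Main.v *)
Require Import Defs.
From mathcomp Require Import all_boot all_order all_algebra.
From mathcomp Require Import ring zify.
Import GRing.Theory.
Local Open Scope ring_scope.

Section Gen.
Variables (K : fieldType) (I : finType) (b : I -> K) (f : {poly K}).
Hypothesis inj_b : injective b.

Definition G (S U : {set I}) : K :=
  (\prod_(u in U) f.[b u]) / \prod_(t in S :\: U) \prod_(u in U) (b t - b u).
Definition Fp (S : {set I}) (k : nat) : {poly K} :=
  \sum_(U : {set I} | (U \subset S) && (#|U| == k)%N)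
     G S U *: \prod_(t in S :\: U) ('X - (b t)%:P).
Definition cc (S : {set I}) (k : nat) : K := \sum_(U : {set I} | (U \subset S) && (#|U| == k)%N) G S U.

Lemma prodU1 (F : I -> K) (j : {set I}) s : s \notin j ->
  \prod_(u in s |: j) F u = F s * \prod_(u in j) F u.
Proof. move=> sj; exact: big_setU1. Qed.
Lemma cardD_sub (S U : {set I}) : U \subset S -> #|S :\: U| = (#|S| - #|U|)%N.
Proof. by move=> sub; rewrite cardsD (setIidPr sub). Qed.

Lemma size_Fp (S : {set I}) k : (size (Fp S k) <= (#|S| - k).+1)%N.
Proof.
rewrite /Fp; apply: (big_ind (fun p : {poly K} => size p <= (#|S| - k).+1)%N).
- by rewrite size_poly0.
- by move=> p q hp hq; apply: leq_trans (size_polyD _ _) _; rewrite geq_max hp hq.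
move=> U /andP[sub /eqP cU]; apply: leq_trans (size_scale_leq _ _) _.
by rewrite -big_enum size_prod_XsubC -cardE cardD_sub // cU.
Qed.

Lemma coef_Fp (S : {set I}) k : (Fp S k)`_(#|S| - k) = cc S k.
Proof.
rewrite /Fp coef_sum /cc; apply: eq_bigr => U /andP[sub /eqP cU].
rewrite coefZ.
have mon : \prod_(t in S :\: U) ('X - (b t)%:P) \is monic by apply: monic_prod_XsubC.
have sz : size (\prod_(t in S :\: U) ('X - (b t)%:P)) = (#|S| - k).+1.
  by rewrite -big_enum size_prod_XsubC -cardE cardD_sub // cU.
move/monicP: mon; rewrite /lead_coef sz /= => ->; by rewrite mulr1.
Qed.

Lemma cc0 (S : {set I}) : cc S 0 = 1.
Proof.
rewrite /cc (big_pred1 set0); last first.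
  by move=> U /=; rewrite cards_eq0; case: eqP => [->|]; rewrite ?sub0set ?andbF.
rewrite /G big_set0 big1 ?divr1 // => t _; by rewrite big_set0.
Qed.

Lemma eval_Fp (S : {set I}) k s : s \in S -> (0 < k)%N ->
  (Fp S k).[b s] = (-1) ^+ (#|S| - k) * f.[b s] * cc (S :\ s) k.-1.
Proof.
move=> sS k0; rewrite /Fp horner_sum (bigID (fun U : {set I} => s \in U)) /=.
rewrite [X in _ + X]big1 ?addr0; last first.
  move=> U /andP[_ sU]; rewrite hornerZ horner_prod (bigD1 s) /=; last first.
    by rewrite inE sU sS.
  by rewrite hornerXsubC subrr mul0r mulr0.
rewrite (reindex_onto (fun j => s |: j) (fun U => U :\ s)); last first.
  by move=> U /andP[_ sU]; rewrite setD1K.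
rewrite /cc mulr_sumr; apply: eq_big.
  move=> j /=; rewrite setU11 andbT.
  case sj: (s \in j).
    have h1 : ((s |: j) :\ s == j) = false.
      apply/negbTE; apply/eqP => e.
      by have := sj; rewrite -e !inE eqxx.
    have h2 : (j \subset S :\ s) = false.
      apply/negbTE; apply/negP => h.
      by have := subsetP h s sj; rewrite !inE eqxx.
    by rewrite h1 h2 !andbF.
  rewrite setU1K ?sj // eqxx ?andbT cardsU1 sj /= add1n.
  rewrite -{1}(prednK k0) eqSS /=.
  rewrite subUset sub1set sS /=.
  congr (_ && _); apply/idP/idP.
    by move=> h; apply/subsetP => x xj; rewrite !inE (subsetP h _ xj) andbT;
      apply/eqP => e; move: sj; rewrite -e xj.
  by move=> h; apply: subset_trans h (subsetDl _ _).
move=> j /andP[/andP[/andP[sub /eqP cj] _] /eqP ej].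
have sj : s \notin j by rewrite -ej setD11.
have sub' : j \subset S :\ s.
  rewrite -ej; apply/subsetP => x; rewrite in_setD1 => /andP[xs xu].
  by rewrite in_setD1 xs (subsetP sub _ xu).
have eD : S :\: (s |: j) = (S :\ s) :\: j by rewrite setDDl.
rewrite hornerZ horner_prod /G eD (prodU1 _ _ _ sj) /=.
have e1 : \prod_(t in S :\ s :\: j) \prod_(u in s |: j) (b t - b u) =
   (\prod_(t in S :\ s :\: j) (b t - b s)) * \prod_(t in S :\ s :\: j) \prod_(u in j) (b t - b u).
  by rewrite -big_split; apply: eq_bigr => t _; apply: prodU1.
have e2 : \prod_(i in S :\ s :\: j) ('X - (b i)%:P).[b s] =
   (-1) ^+ #|S :\ s :\: j| * \prod_(i in S :\ s :\: j) (b i - b s).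
  by rewrite -prodrN; apply: eq_bigr => t _; rewrite hornerXsubC opprB.
rewrite e1 e2.
have cD : #|S :\ s :\: j| = (#|S| - k)%N.
  by rewrite cardD_sub // -cj cardsU1 sj (cardsD1 s S) sS /= !add1n subSS.
rewrite cD.
have Q0 : \prod_(i in S :\ s :\: j) (b i - b s) != 0.
  apply/prodf_neq0 => t; rewrite !inE => /andP[_ /andP[ts _]].
  by rewrite subr_eq0; apply: contra ts => /eqP /inj_b ->.
move: Q0.
set Q := \prod_(i in _) (b i - b s).
set P := \prod_(i in j) _.
set R := \prod_(i in _) \prod_(u in j) _.
move=> Q0.
have [R0|R0] := eqVneq R 0.
  by rewrite R0 !(mulr0, invr0, mul0r).
field.
by rewrite Q0 R0.
Qed.


Lemma uniq_pt (S : {set I}) (p : {poly K}) : (size p <= #|S|)%N ->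
  (forall s, s \in S -> p.[b s] = 0) -> p = 0.
Proof.
move=> sz h; apply/eqP; apply/negPn/negP => p0.
have := @max_poly_roots _ p [seq b s | s <- enum S] p0.
rewrite size_map -cardE => H.
have : (#|S| < size p)%N.
  apply: H; last by rewrite map_inj_uniq // enum_uniq.
  by apply/allP => x /mapP[s]; rewrite mem_enum => sS ->; apply/eqP/h.
by rewrite ltnNge sz.
Qed.

Variable m : nat.
Hypotheses (fmon : f \is monic) (fsz : size f = m.+1).

Lemma main N : forall (S : {set I}) k, #|S| = N -> (0 < k)%N -> (m + k <= N)%N ->
  Fp S k = (if (m + k == N)%N then (-1) ^+ (m * k)
            else if (k == 1)%N then (-1) ^+ N.-1 else 0) *: f.
Proof.
elim: N => [|N IH] S k cS k0 le.
  by move: le k0; rewrite leqn0 addn_eq0 => /andP[_ /eqP ->].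
apply/eqP; rewrite -subr_eq0; apply/eqP; apply: (@uniq_pt S).
  apply: leq_trans (size_polyD _ _) _; rewrite size_polyN geq_max; apply/andP; split.
    apply: leq_trans (size_Fp _ _) _; rewrite cS; case: k k0 {le} => // k _.
    by rewrite subSS ltnS leq_subr.
  apply: leq_trans (size_scale_leq _ _) _; rewrite fsz cS.
  by apply: leq_trans le; rewrite -addn1 leq_add2l.
move=> s sS; rewrite hornerD hornerN hornerZ eval_Fp // cS.
have cS' : #|S :\ s| = N by move: cS; rewrite (cardsD1 s S) sS add1n => -[].
case: k k0 le => // -[|j] _ le.
  rewrite cc0 mulr1 /= subn1 /= addn1 eqSS.
  case: eqP => [->|_]; first by rewrite muln1 subrr.
  by rewrite subrr.
have le' : (m + j.+1 <= N)%N by move: le; rewrite addnS.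
have := IH (S :\ s) j.+1 cS' isT le'.
move=> /(congr1 (fun p : {poly K} => p`_(#|S :\ s| - j.+1))).
rewrite coef_Fp => ->; rewrite coefZ cS' /= subSS.
rewrite !addnS eqSS.
case: eqP => [e|ne].
  have -> : (N - j.+1 = m)%N by move: e; lia.
  have -> : f`_m = 1.
    by move/monicP: fmon; rewrite /lead_coef fsz.
  rewrite mulr1 mulrC mulrA -exprD.
  by rewrite e eqxx (mulnS m j.+1) addnC subrr.
have -> : f`_(N - j.+1) = 0.
  apply: nth_default; rewrite fsz.
  by move: ne le'; lia.
rewrite mulr0 mulr0; case: eqP => [e'|_]; last by rewrite mul0r subr0.
by exfalso; apply: ne; move: e'; lia.
Qed.

End Gen.
Arguments Fp {K I} b f S k.
Arguments G {K I} b f S U.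

Lemma Syl_Fp (K : fieldType) (m n : nat) (a : 'I_m -> K) (b : 'I_n -> K) d :
  (d <= n)%N ->
  Syl 0 d a b = (-1) ^+ (m * (n - d)) *:
     Fp b (\prod_(i < m) ('X - (a i)%:P)) setT (n - d).
Proof.
move=> dn.
set f := \prod_(i < m) ('X - (a i)%:P).
rewrite /Syl (big_pred1 set0); last first.
  by move=> S; rewrite cards_eq0.
rewrite (reindex_inj (@setC_inj _)) /= /Fp scaler_sumr.
apply: eq_big.
  move=> U; rewrite subsetT /=.
  have := cardsC U; rewrite card_ord => e.
  move: e dn; set x := #|~: U|; set y := #|U|; move=> e dn; apply/eqP/eqP; lia.
move=> U hU.
have e0 : forall (F : 'I_m -> K), \prod_(i in (set0 : {set 'I_m})) F i = 1.
  by move=> F; apply: big_pred0 => i; rewrite in_set0.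
have e0p : forall (F : 'I_m -> {poly K}), \prod_(i in (set0 : {set 'I_m})) F i = 1.
  by move=> F; apply: big_pred0 => i; rewrite in_set0.
rewrite /resR /resX e0 e0p e0 setC0 setCK mul1r mul1r mul1r.
rewrite /G setTD scalerA; congr (_ *: _).
have -> : \prod_(i in [set: 'I_m]) \prod_(j in U) (a i - b j) =
   \prod_(j in U) ((-1) ^+ m * f.[b j]).
  rewrite exchange_big /=; apply: eq_bigr => j _.
  rewrite /f horner_prod.
  rewrite (eq_bigl (fun _ => true)); last by move=> i; rewrite inE.
  rewrite -[m in (-1) ^+ m]card_ord -prodrN.
  by apply: eq_bigr => i _; rewrite hornerXsubC opprB.
rewrite big_split /= prodr_const -exprM.
have cU : #|U| = (n - d)%N.
  have := cardsC U; rewrite card_ord; move: hU dn; set x := #|~: U|; set y := #|U|.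
  move=> /eqP hU dn e; lia.
rewrite cU; ring.
Qed.

Theorem corollary2p6 (K : fieldType) (m n : nat)
    (a : 'I_m -> K) (b : 'I_n -> K)
    (inj_a : injective a) (inj_b : injective b) (d : nat)
    (hdn : (d <= n.-1)%N) (hn : (0 < n)%N) (hmd : (m <= d)%N) :
  let f := \prod_(i < m) ('X - (a i)%:P) in
  ((m < d)%N && (d < n.-1)%N -> Syl 0 d a b = 0) /\
  (((m < d)%N && (d == n.-1)) || (m == d) ->
     Syl 0 d a b = ((-1 : K) ^ ((m%:Z - d%:Z) * (n%:Z - d%:Z))) *: f).
Proof.
move=> f.
have fmon : f \is monic by apply: monic_prod_XsubC.
have fsz : size f = m.+1.
  by rewrite /f size_prod_XsubC -[in RHS](card_ord m) cardT enumT.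
have dn : (d <= n)%N by lia.
have M := @main K _ b f inj_b m fmon fsz n setT (n - d).
rewrite cardsT card_ord in M.
have {}M := M erefl ltac:(lia) ltac:(lia).
rewrite Syl_Fp // -/f M.
split.
  move=> /andP[h1 h2].
  have -> : (m + (n - d) == n)%N = false by apply/eqP; lia.
  have -> : (n - d == 1)%N = false by apply/eqP; lia.
  by rewrite scale0r scaler0.
case/orP.
  move=> /andP[h1 /eqP h2].
  have -> : (m + (n - d) == n)%N = false by apply/eqP; lia.
  have -> : (n - d = 1)%N by lia.
  rewrite eqxx scalerA -exprD muln1.
  have -> : (m%:Z - d%:Z) * (n%:Z - d%:Z) = - ((d - m)%N%:Z).
    have -> : n%:Z - d%:Z = 1 by rewrite subzn //; congr Posz; lia.
    by rewrite mulr1 -opprB subzn // ltnW.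
  rewrite -exprnN -exprVn invrN1.
  rewrite -signr_odd -[in RHS]signr_odd oddD oddB //.
  by rewrite h2 addbC.
move=> /eqP e; subst d.
rewrite addnC subnK // eqxx subrr mul0r expr0z scalerA -exprD.
by rewrite -signr_odd oddD addbb /= scale1r.
Qed.
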